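(* Let $C = c_0c_1\dots c_{m-1}c_0$ and $D=(0)(1)\dots(n-1)(0)$ be reflexive digraph cycles with $D$ non-contractible. For any homomorphism $\phi \in \mathrm{Hom}(C,D)$ and any cutback $P = c_a \dots c_b$ of $C$ (with respect to $\phi$), there is a path of up edges in $\mathrm{Hom}(C,D)$ from $\phi$ to the homomorphism $\phi'$ obtained from $\phi$ by setting $\phi'(c_i) = \phi(c_a)$ for all vertices $c_i$ of $P$ (and $\phi'=\phi$ elsewhere).
   Context: A digraph is a binary relation $\to$ on a finite vertex set; a loop is an arc $uu$; reflexive means every vertex has a loop. A digraph cycle $C=c_0c_1\dots c_{m-1}c_0$ (indices mod $m$, $m\ge3$) has underlying graph the cycle with edges $c_ic_{i+1}$. $D=(0)(1)\dots(n-1)(0)$ has vertex set the integers mod $n$. $D$ is non-contractible if it has length at least $4$ or is a directed $3$-cycle. A homomorphism $\phi:C\to D$ satisfies $u\to v \Rightarrow \phi(u)\to\phi(v)$. $\mathrm{Hom}(C,D)$ is the digraph on homomorphisms with $\phi\to\phi'$ iff $\phi(u)\to\phi'(v)$ for all arcs $u\to v$ of $C$; $\phi,\phi'$ are adjacent if $\phi\to\phi'$ or $\phi'\to\phi$. For adjacent $\phi,\phi'$ (with $C$ reflexive) each vertex $c$ has $\phi'(c)\in\{\phi(c),\phi(c)\pm1\}$; $c$ moves up if $\phi'(c)=\phi(c)+1$ and moves down if $\phi'(c)=\phi(c)-1$. The pair $(\phi,\phi')$ is an up edge if they are adjacent and every vertex that moves, moves up. A path of up edges from $\phi$ to $\phi'$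 is a sequence $\phi=\phi_0,\dots,\phi_k=\phi'$ with each $(\phi_{j},\phi_{j+1})$ an up edge. Under $\phi$, edge $c_ic_{i+1}$ is increasing, stationary or decreasing as $\phi(c_{i+1})-\phi(c_i)$ is $1,0,-1$; the increase of a subpath is its number of increasing edges minus its number of decreasing edges. A subpath $P=c_a\dots c_b$ is a cutback (for $\phi$) if its increase is $0$ and the increase of $c_a\dots c_i$ is negative for all $i\in\{a+1,\dots,b-1\}$. *)

(* Defs.v *)
From mathcomp Require Import all_boot all_order all_algebra.
Set Implicit Arguments. Unset Strict Implicit. Unset Printing Implicit Defensive.
Import Order.TTheory GRing.Theory Num.Theory.

(* A digraph on the vertex set 'I_m is a relation E : rel 'I_m (u -> v iff E u v).
   Vertex c_i of a cycle is the ordinal i; c_{i+1} is ordS i (indices mod m). *)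

Definition refl_digraph_cycle (m : nat) (E : rel 'I_m) : Prop :=
  [/\ 3 <= m,
      (forall u, E u u),
      (forall u v, u != v -> E u v -> v = ordS u \/ u = ordS v)
    & (forall i, E i (ordS i) \/ E (ordS i) i)].

Definition noncontractible (n : nat) (E : rel 'I_n) : Prop :=
  4 <= n \/
  (n = 3 /\
   ((forall i, E i (ordS i) /\ ~ E (ordS i) i) \/
    (forall i, E (ordS i) i /\ ~ E i (ordS i)))).

Definition is_hom (m n : nat) (EC : rel 'I_m) (ED : rel 'I_n) (phi : 'I_m -> 'I_n) : Prop :=
  forall u v, EC u v -> ED (phi u) (phi v).

Definition hom_arc (m n : nat) (EC : rel 'I_m) (ED : rel 'I_n) (phi psi : 'I_m -> 'I_n) : Prop :=
  forall u v, EC u v -> ED (phi u) (psi v).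

Definition up_edge (m n : nat) (EC : rel 'I_m) (ED : rel 'I_n) (phi psi : 'I_m -> 'I_n) : Prop :=
  [/\ is_hom EC ED phi, is_hom EC ED psi,
      (hom_arc EC ED phi psi \/ hom_arc EC ED psi phi)
    & (forall c, psi c != phi c -> psi c = ordS (phi c))].

Definition cv (m : nat) (a : 'I_m) (t : nat) : 'I_m := iter t (@ordS m) a.

Definition edge_incr (m n : nat) (phi : 'I_m -> 'I_n) (i : 'I_m) : int :=
  if phi (ordS i) == ordS (phi i) then 1%R
  else if phi (ordS i) == ord_pred (phi i) then (-1)%R
  else 0%R.

Definition incr (m n : nat) (phi : 'I_m -> 'I_n) (a : 'I_m) (j : nat) : int :=
  (\sum_(t < j) edge_incr phi (cv a t))%R.

(* The subpath P = c_a ... c_{a+L} (a path: 1 <= L <= m-1) is a cutback for phi. *)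
Definition cutback (m n : nat) (phi : 'I_m -> 'I_n) (a : 'I_m) (L : nat) : Prop :=
  [/\ 0 < L, L < m, incr phi a L = 0%R
    & (forall i, 0 < i -> i < L -> (incr phi a i < 0)%R)].

Definition flatten_cutback (m n : nat) (phi : 'I_m -> 'I_n) (a : 'I_m) (L : nat) : 'I_m -> 'I_n :=
  fun c => if [exists t : 'I_L.+1, c == cv a t] then phi a else phi c.

(* Main.v *)
Require Import Defs.
From mathcomp Require Import all_boot all_order all_algebra.
From mathcomp Require Import zify.
Import Order.TTheory GRing.Theory Num.Theory.
Set Implicit Arguments. Unset Strict Implicit. Unset Printing Implicit Defensive.
Definition off (m : nat) (a c : 'I_m) : nat := (c + (m - a)) %% m.

Lemma val_cv m (a : 'I_m) t : val (cv a t) = (a + t) %% m.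
Proof.
elim: t => [|t IH]; first by rewrite addn0 modn_small.
by rewrite /cv iterS -/(cv a t) /= IH -addn1 modnDml addn1 addnS.
Qed.

Lemma off_cv m (a : 'I_m) t : t < m -> off a (cv a t) = t.
Proof.
move=> tm; rewrite /off val_cv modnDml.
have -> : a + t + (m - a) = t + m by have := ltn_ord a; lia.
by rewrite modnDr modn_small.
Qed.
Lemma cv_off m (a c : 'I_m) : cv a (off a c) = c.
Proof.
apply: val_inj; rewrite val_cv /off modnDmr.
have -> : a + (c + (m - a)) = c + m by have := ltn_ord a; lia.
by rewrite modnDr modn_small.
Qed.
Lemma off_lt m (a c : 'I_m) : off a c < m.
Proof. by rewrite /off ltn_mod; case: m a c => [[]|]. Qed.
Lemma off_ordS m (a c : 'I_m) : off a (ordS c) = (off a c).+1 %% m.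
Proof.
rewrite /off /= modnDml -[in RHS]addn1 modnDml addn1 addSn.
by [].
Qed.

Lemma inP_iff m (a c : 'I_m) L : L < m ->
  [exists t : 'I_L.+1, c == cv a t] = (off a c <= L).
Proof.
move=> Lm; apply/existsP/idP => [[t /eqP ->]|H].
  by rewrite off_cv ?(leq_trans (ltn_ord t)) // -ltnS.
by exists (Ordinal (H : off a c < L.+1)); rewrite /= cv_off.
Qed.

Lemma D_adj n (ED : rel 'I_n) x w : refl_digraph_cycle ED -> (ED x w \/ ED w x) ->
  w = x \/ w = ordS x \/ w = ord_pred x.
Proof.
case=> _ _ He _ H; have [->|nwx] := eqVneq w x; first by left.
right; case: H => H.
  case: (He x w _ H); first by rewrite eq_sym.
    by left.
  by move=> ->; right; rewrite ordSK.
case: (He w x nwx H) => [->|->]; last by left.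
by right; rewrite ordSK.
Qed.

Lemma incrS m n (phi : 'I_m -> 'I_n) a t :
  incr phi a t.+1 = (incr phi a t + edge_incr phi (cv a t))%R.
Proof. by rewrite /incr big_ord_recr. Qed.

Lemma iterP n k (x : 'I_n) : iter k.+1 (@ord_pred n) x = ord_pred (iter k (@ord_pred n) x).
Proof. by []. Qed.

Theorem lemma2p2 (m n : nat) (EC : rel 'I_m) (ED : rel 'I_n)
    (phi : 'I_m -> 'I_n) (a : 'I_m) (L : nat) :
  refl_digraph_cycle EC -> refl_digraph_cycle ED -> noncontractible ED ->
  is_hom EC ED phi -> cutback phi a L ->
  exists (k : nat) (f : nat -> 'I_m -> 'I_n),
    [/\ f 0 =1 phi, f k =1 flatten_cutback phi a L
      & forall j, j < k -> up_edge EC ED (f j) (f j.+1)].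
Proof.
move=> HC HD _ hphi [L0 Lm i0 ineg].
have [m3 ECr ECc ECe] := HC.
have [n3 EDr EDc EDe] := HD.
pose h t := `|incr phi a t|%N.
have Hneg : forall t, t <= L -> (incr phi a t <= 0)%R.
  move=> t tL; have [->|t0] := eqVneq t 0; first by rewrite /incr big_ord0.
  have [->|tL'] := eqVneq t L; first by rewrite i0.
  by apply/ltW/ineg; lia.
have Hphi : forall t, t <= L -> phi (cv a t) = iter (h t) (@ord_pred n) (phi a).
  elim=> [|t IH] tL; first by rewrite /h /incr big_ord0.
  have := IH (ltnW tL); rewrite /h incrS /edge_incr.
  have := Hneg _ tL; have := Hneg _ (ltnW tL); rewrite incrS /edge_incr.
  have Hadj := @D_adj _ _ (phi (cv a t)) (phi (ordS (cv a t))) HD.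
  have /Hadj : ED (phi (cv a t)) (phi (ordS (cv a t))) \/ ED (phi (ordS (cv a t))) (phi (cv a t)).
    by case: (ECe (cv a t)) => H; [left|right]; apply: hphi.
  rewrite [cv a t.+1]/cv iterS -/(cv a t).
  case: eqP => [E1|N1].
    move=> _ H1 H2 IH'.
    have E : `|incr phi a t|%N = (`|(incr phi a t + 1)%R|%N).+1 by lia.
    by rewrite E1 IH' E iterP ord_predK.
  case: eqP => [E2|N2].
    move=> _ H1 H2 IH'.
    have E : `|(incr phi a t + -1)%R|%N = (`|incr phi a t|%N).+1 by lia.
    by rewrite E2 IH' E iterP.
  move=> [E3|[E3|E3]]; last by [].
    by rewrite addr0 E3 => _ _ ->.
  by [].
have hL : h L = 0 by rewrite /h i0.
have h0 : h 0 = 0 by rewrite /h /incr big_ord0.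
have hpos : forall t, 0 < t < L -> 0 < h t.
  move=> t /andP[t0 tL]; have := ineg t t0 tL; rewrite /h; lia.
have Hh : forall t, t < L -> h t.+1 = h t \/ h t.+1 = (h t).+1 \/ h t = (h t.+1).+1.
  move=> t tL; have := Hneg _ tL; have := Hneg _ (ltnW tL).
  rewrite /h incrS /edge_incr.
  case: eqP => _; first lia.
  case: eqP => _; lia.
pose K := \max_(t < L.+1) h t.
have HK : forall t, t <= L -> h t <= K.
  by move=> t tL; apply: (@leq_bigmax _ (fun t : 'I_L.+1 => h t) (Ordinal (tL : t < L.+1))).
pose g j t := iter (minn (h t) (K - j)) (@ord_pred n) (phi a).
pose f j c := if off a c <= L then g j (off a c) else phi c.
exists K, f; split.
- move=> c; rewrite /f /g; case: ifP => // cL.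
  by rewrite subn0 (minn_idPl (HK _ cL)) -Hphi // cv_off.
- move=> c; rewrite /f /flatten_cutback inP_iff //; case: ifP => // _.
  by rewrite /g subnn minn0.
have fphi : forall j c, (L <= off a c) || (off a c == 0) -> f j c = phi c.
  move=> j c H; rewrite /f; case: ifP => // cL.
  have Ec := cv_off a c.
  have [E|E] : off a c = L \/ off a c = 0 by lia.
    by rewrite /g E hL min0n -Ec E Hphi // hL.
  by rewrite /g E h0 min0n -Ec E.
have Hmin : forall x y M, (y = x \/ y = x.+1 \/ x = y.+1) ->
    (minn x M = x /\ minn y M = y) \/ minn x M = minn y M by move=> *; lia.
have consec : forall j c, (f j c = phi c /\ f j (ordS c) = phi (ordS c)) \/ f j c = f j (ordS c).
  move=> j c; have ltm := off_lt a c; have Hs := off_ordS a c.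
  case: (ltnP (off a c) L) => tL.
    rewrite modn_small in Hs; last by lia.
    have cL : off a c <= L by apply: ltnW.
    have c'L : off a (ordS c) <= L by rewrite Hs.
    have Ec : cv a (off a c).+1 = ordS c by rewrite /cv iterS -/(cv a _) cv_off.
    rewrite /f cL c'L /g Hs.
    case: (Hmin (h (off a c)) (h (off a c).+1) (K - j) (Hh _ tL)) => [[-> ->]|->]; last by right.
    left; split; first by rewrite -Hphi ?cv_off.
    by rewrite -Hphi // Ec.
  left; split; apply: fphi; first by rewrite tL.
  rewrite Hs; have [E|H] : (off a c).+1 = m \/ (off a c).+1 < m by lia.
    by rewrite E modnn eqxx orbT.
  by rewrite modn_small // (leqW tL).
have fhom : forall j, is_hom EC ED (f j).
  move=> j u v Euv; have [<-|nuv] := eqVneq u v; first exact: EDr.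
  case: (ECc u v nuv Euv) => E; subst.
    case: (consec j u) => [[-> ->]|->]; [exact: hphi | exact: EDr].
  case: (consec j v) => [[-> ->]|->]; [exact: hphi | exact: EDr].
pose y j := iter (K - j) (@ord_pred n) (phi a).
have moved : forall j c, j < K -> f j.+1 c != f j c ->
    [/\ 0 < off a c < L, K - j <= h (off a c), f j c = y j & f j.+1 c = ordS (y j)].
  move=> j c jK; rewrite /f; case: ifP => [cL|]; last by rewrite eqxx.
  rewrite /g => Hne.
  have Hm : minn (h (off a c)) (K - j.+1) <> minn (h (off a c)) (K - j).
    by move=> E; move: Hne; rewrite E eqxx.
  have HKj : K - j <= h (off a c) by lia.
  have t0 : off a c != 0 by apply/eqP => E; move: HKj; rewrite E h0; lia.
  have tL : off a c != L by apply/eqP => E; move: HKj; rewrite E hL; lia.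
  have E1 : minn (h (off a c)) (K - j.+1) = K - j.+1 by lia.
  have E2 : K - j = (K - j.+1).+1 by lia.
  split.
  - lia.
  - exact: HKj.
  - by rewrite (minn_idPr HKj).
  - by rewrite E1 /y E2 iterP ord_predK.
have nbr : forall j c c', j < K -> f j.+1 c != f j c -> (c' = ordS c \/ c = ordS c') ->
    f j c' = y j \/ f j c' = ordS (y j).
  move=> j c c' jK Hne Hc'.
  have [/andP[t0 tL] HKj _ _] := moved j c jK Hne.
  have E2 : K - j = (K - j.+1).+1 by lia.
  have Hsel : forall u, (u = h (off a c) \/ u = (h (off a c)).+1 \/ h (off a c) = u.+1) ->
      iter (minn u (K - j)) (@ord_pred n) (phi a) = y j \/
      iter (minn u (K - j)) (@ord_pred n) (phi a) = ordS (y j).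
    move=> u Hu.
    have [->|->] : minn u (K - j) = K - j \/ minn u (K - j) = K - j.+1 by lia.
      by left.
    by right; rewrite /y E2 iterP ord_predK.
  case: Hc' => [->|Ec].
    have Hs := off_ordS a c; rewrite modn_small in Hs; last by lia.
    rewrite /f Hs; case: ifP => [_|]; last by lia.
    rewrite /g; apply: Hsel; have := Hh _ tL; lia.
  have Hs := off_ordS a c'; have ltm := off_lt a c'; rewrite -Ec in Hs.
  have [E|H] : (off a c').+1 = m \/ (off a c').+1 < m by lia.
    by move: Hs t0; rewrite E modnn => ->.

  rewrite modn_small // in Hs.
  rewrite /f; case: ifP => [_|]; last by lia.
  have sL : off a c' < L by lia.
  rewrite /g; apply: Hsel; have := Hh _ sL; rewrite -Hs; lia.
move=> j jK; split; [exact: fhom | exact: fhom | | ].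
  case: (EDe (y j)) => Hyz; [left|right] => u v Euv.
    have [Ev|Hne] := eqVneq (f j.+1 v) (f j v); first by rewrite Ev; exact: fhom.
    have [_ _ Ey Ez] := moved j v jK Hne.
    rewrite Ez; have [->|nuv] := eqVneq u v; first by rewrite Ey.
    have Hc : u = ordS v \/ v = ordS u by case: (ECc u v nuv Euv); [right|left].
    by case: (nbr j v u jK Hne Hc) => ->; [exact: Hyz | exact: EDr].
  have [Ev|Hne] := eqVneq (f j.+1 u) (f j u); first by rewrite Ev; exact: fhom.
  have [_ _ Ey Ez] := moved j u jK Hne.
  rewrite Ez; have [<-|nuv] := eqVneq u v; first by rewrite Ey.
  by case: (nbr j u v jK Hne (ECc u v nuv Euv)) => ->; [exact: Hyz | exact: EDr].
by move=> c Hne; have [_ _ Ey Ez] := moved j c jK Hne; rewrite Ez Ey.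
Qed.
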